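(* Let $(\Gamma,M)$ be a connected E-GCM graph such that the root set $\Phi_M$ is infinite. Then for every proper subset $J\subsetneq I_n$, the set $\Phi_M^J:=\{\alpha\in\Phi_M^+ : \alpha\notin\mathrm{span}_{\mathbb{R}}\{\alpha_j\}_{j\in J}\}$ is infinite.
   Context: E-GCM $M=(M_{ij})_{i,j\in I_n}$: real, $M_{ii}=2$, $M_{ij}\le0$ for $i\ne j$, $M_{ij}\ne0\iff M_{ji}\ne0$, and nonzero $M_{ij}M_{ji}$ is either $\ge4$ or equals $4\cos^2(\pi/m)$ for an integer $m\ge3$. The E-GCM graph has nodes $\gamma_i$, adjacent iff $M_{ij}\ne0$. The Coxeter group $W$ has generators $s_i$ with $s_i^2=e$ and $(s_is_j)^{m_{ij}}=e$, where $m_{ij}=k$ if $M_{ij}M_{ji}=4\cos^2(\pi/k)$ ($k\ge2$ integer) and $m_{ij}=\infty$ if $M_{ij}M_{ji}\ge4$. $W$ acts on the real vector space $V$ with basis $(\alpha_i)_{i\in I_n}$ by $s_i.\alpha_j=\alpha_j-M_{ij}\alpha_i$. $\Phi_M=\{w.\alpha_i: w\in W, i\in I_n\}$ and $\Phi_M^+$ is the set of roots with all coefficients nonnegative in the basis $(\alpha_i)$. *)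

(* Defs.v *)
From HB Require Import structures.
From mathcomp Require Import all_boot all_order all_algebra.
From mathcomp Require Import reals trigo.
Set Implicit Arguments. Unset Strict Implicit. Unset Printing Implicit Defensive.
Import Order.TTheory GRing.Theory Num.Theory.
Local Open Scope ring_scope.

Section EGCM.
Variables (R : realType) (n : nat).

Definition is_EGCM (M : 'M[R]_n) : Prop :=
  (forall i, M i i = 2) /\
  (forall i j, i != j -> M i j <= 0) /\
  (forall i j, M i j != 0 <-> M j i != 0) /\
  (forall i j, i != j -> M i j * M j i != 0 ->
     4 <= M i j * M j i \/
     exists m : nat, (3 <= m)%N /\ M i j * M j i = 4 * (cos (pi / m%:R)) ^+ 2).

Definition egcm_adj (M : 'M[R]_n) : rel 'I_n := fun i j => (i != j) && (M i j != 0).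

Definition egcm_connected (M : 'M[R]_n) : Prop :=
  forall i j : 'I_n, connect (egcm_adj M) i j.

Definition alpha (i : 'I_n) : 'rV[R]_n := delta_mx 0 i.

(* linear action of s_i:  s_i . alpha_j = alpha_j - M_ij alpha_i *)
Definition refl (M : 'M[R]_n) (i : 'I_n) (v : 'rV[R]_n) : 'rV[R]_n :=
  v - (\sum_(j < n) v 0 j * M i j) *: alpha i.

Definition act_word (M : 'M[R]_n) (w : seq 'I_n) (v : 'rV[R]_n) : 'rV[R]_n :=
  foldr (refl M) v w.

Definition is_root (M : 'M[R]_n) (v : 'rV[R]_n) : Prop :=
  exists (w : seq 'I_n) (i : 'I_n), v = act_word M w (alpha i).

Definition is_pos_root (M : 'M[R]_n) (v : 'rV[R]_n) : Prop :=
  is_root M v /\ forall j, 0 <= v 0 j.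

Definition in_span (J : {set 'I_n}) (v : 'rV[R]_n) : Prop :=
  exists c : 'I_n -> R, v = \sum_(j in J) c j *: alpha j.

End EGCM.

Definition infinite_set (T : eqType) (P : T -> Prop) : Prop :=
  forall s : seq T, exists x, P x /\ x \notin s.

(* Main.v *)
Require Import Defs.
From HB Require Import structures.
From mathcomp Require Import all_boot all_order all_algebra.
From mathcomp Require Import reals trigo.
From Stdlib Require Import Classical.
From mathcomp Require Import ring lra zify.
Set Implicit Arguments. Unset Strict Implicit. Unset Printing Implicit Defensive.
Import Order.TTheory GRing.Theory Num.Theory.
Local Open Scope ring_scope.

Section Basic.
Variables (R : realType) (n : nat) (M : 'M[R]_n).
Hypothesis Mii : forall i, M i i = 2.

Definition ev (i : 'I_n) : 'cV[R]_n := delta_mx i 0.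
Definition Sm (i : 'I_n) : 'M[R]_n := 1%:M - ev i *m row i M.
Definition Wmx (w : seq 'I_n) : 'M[R]_n := foldr (fun i A => Sm i *m A) 1%:M w.

Lemma row_ev i j : row i M *m ev j = (M i j)%:M.
Proof.
apply/matrixP => a b; rewrite !ord1 !mxE (bigD1 j) //= big1 ?addr0.
  by rewrite !mxE !eqxx mulr1.
by move=> k /negbTE nkj; rewrite !mxE nkj mulr0.
Qed.

Lemma Sm_ev i j : Sm i *m ev j = ev j - M i j *: ev i.
Proof.
by rewrite /Sm mulmxBl mul1mx -mulmxA row_ev mul_mx_scalar.
Qed.

Lemma Sm_mul x i : Sm i *m x = x - (row i M *m x) 0 0 *: ev i.
Proof.
rewrite /Sm mulmxBl mul1mx -mulmxA. rewrite {1}(mx11_scalar (row i M *m x)). by rewrite mul_mx_scalar.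
Qed.

Lemma mx_ext (A B : 'M[R]_n) : (forall x : 'cV[R]_n, A *m x = B *m x) -> A = B.
Proof.
move=> H; apply/matrixP => i j.
by have := congr1 (fun X : 'cV[R]_n => X i 0) (H (delta_mx j 0)); rewrite -!colE !mxE.
Qed.

Lemma SmK_vec i (x : 'cV[R]_n) : Sm i *m (Sm i *m x) = x.
Proof.
rewrite [Sm i *m x]Sm_mul; set c := (row i M *m x) 0 0.
rewrite mulmxBr -scalemxAr Sm_ev Mii Sm_mul -/c scalerBr scalerA -scalerBl.
have -> : c - c * 2 = - c by rewrite mulrDr mulr1 opprD addrA subrr add0r.
by rewrite scaleNr opprK subrK.
Qed.

Lemma SmK i : Sm i *m Sm i = 1%:M.
Proof. by apply: mx_ext => x; rewrite -mulmxA SmK_vec mul1mx. Qed.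

Lemma Wmx_cat w1 w2 : Wmx (w1 ++ w2) = Wmx w1 *m Wmx w2.
Proof. by elim: w1 => [|i w IH] /=; rewrite ?mul1mx // IH mulmxA. Qed.

Lemma Wmx_rcons w i : Wmx (rcons w i) = Wmx w *m Sm i.
Proof. by rewrite -cats1 Wmx_cat /= mulmx1. Qed.


Section Len.
Variables (A : finType) (emb : A -> 'I_n).
Definition WA (u : seq A) := Wmx (map emb u).
Definition lenP (u : seq A) N := [exists t : N.-tuple A, WA t == WA u].
Lemma lenP_ex u : exists N, lenP u N.
Proof. by exists (size u); apply/existsP; exists (in_tuple u). Qed.
Definition lenA u := ex_minn (lenP_ex u).

Lemma lenA_spec u : exists r, size r = lenA u /\ WA r = WA u.
Proof.
rewrite /lenA; case: ex_minnP => N /existsP [t /eqP Ht] _.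
by exists t; rewrite size_tuple.
Qed.

Lemma lenA_min u r : WA r = WA u -> (lenA u <= size r)%N.
Proof.
move=> H; rewrite /lenA; case: ex_minnP => N _; apply.
by apply/existsP; exists (in_tuple r); apply/eqP.
Qed.

Lemma lenA_le u : (lenA u <= size u)%N.
Proof. exact: lenA_min. Qed.

Lemma lenA_eq u u' : WA u = WA u' -> lenA u = lenA u'.
Proof.
move=> H; apply/eqP; rewrite eqn_leq.
have [r [sr Hr]] := lenA_spec u; have [r' [sr' Hr']] := lenA_spec u'.
rewrite -{1}sr' -{2}sr; apply/andP; split; apply: lenA_min; by rewrite ?Hr ?Hr' H.
Qed.

Lemma WA_cat u1 u2 : WA (u1 ++ u2) = WA u1 *m WA u2.
Proof. by rewrite /WA map_cat Wmx_cat. Qed.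

Lemma WA_cons c u : WA (c :: u) = Sm (emb c) *m WA u.
Proof. by []. Qed.

Lemma lenA_cat u1 u2 : (lenA (u1 ++ u2) <= lenA u1 + lenA u2)%N.
Proof.
have [r1 [s1 H1]] := lenA_spec u1; have [r2 [s2 H2]] := lenA_spec u2.
rewrite -s1 -s2 -size_cat lenA_min // !WA_cat H1 H2 //.
Qed.
End Len.

Fixpoint altG (c : bool) (k : nat) : seq bool :=
  if k is k'.+1 then (c (+) odd k') :: altG c k' else [::].

Lemma size_altG c k : size (altG c k) = k.
Proof. by elim: k => //= k ->. Qed.

Lemma altG_split c a b : altG c (a + b) = altG (c (+) odd b) a ++ altG c b.
Proof.
elim: a => [|a IH] //; rewrite addSn /= IH; congr (_ :: _).
by rewrite oddD -addbA [odd a (+) _]addbC.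
Qed.

Lemma altG_last c k : altG c k.+1 = rcons (altG (~~ c) k) c.
Proof.
elim: k c => [|k IH] c /=; first by rewrite addbF.
by rewrite -IH /= addbN addNb.
Qed.

Lemma map_negb_altG c k : map negb (altG c k) = altG (~~ c) k.
Proof. by elim: k => //= k ->; rewrite addNb. Qed.

Section Rank2.
Variables (s s' : 'I_n).
Definition emb2 (c : bool) := if c then s else s'.
Local Notation W2 := (WA emb2).
Local Notation l2 := (lenA emb2).
Definition ca := - M s s'.
Definition cb := - M s' s.
Definition V2 (x y : R) : 'cV[R]_n := x *: ev s + y *: ev s'.

Fixpoint XY (k : nat) : R * R :=
  if k is k'.+1 then
    let: (x, y) := XY k' in if odd k' then (- x + ca * y, y) else (x, cb * x - y)
  else (1, 0).

Lemma Sm_s_V2 x y : Sm s *m V2 x y = V2 (- x + ca * y) y.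
Proof.
rewrite /V2 mulmxDr -!scalemxAr !Sm_ev Mii /ca.
by apply/matrixP => i j; rewrite !mxE; ring.
Qed.

Lemma Sm_s'_V2 x y : Sm s' *m V2 x y = V2 x (cb * x - y).
Proof.
rewrite /V2 mulmxDr -!scalemxAr !Sm_ev Mii /cb.
by apply/matrixP => i j; rewrite !mxE; ring.
Qed.

Lemma W2_XY k : W2 (altG false k) *m ev s = V2 (XY k).1 (XY k).2.
Proof.
elim: k => [|k IH]; first by rewrite /WA /= mul1mx /V2 scale1r scale0r addr0.
rewrite /= WA_cons -mulmxA IH; case: (XY k) => x y /=.
by case: (odd k) => /=; rewrite ?Sm_s_V2 ?Sm_s'_V2.
Qed.

Lemma red_alt r : (forall r', W2 r' = W2 r -> (size r <= size r')%N) ->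
  exists c, r = altG c (size r).
Proof.
elim: r => [|x r IH] Hred; first by exists false.
have /IH [c Hc] : forall r', W2 r' = W2 r -> (size r <= size r')%N.
  by move=> r' H; have := Hred (x :: r'); rewrite !WA_cons H /= ltnS; apply.
move: Hc; case E: (size r) => [|k] Hc.
  by exists x; rewrite Hc /= addbF.
case: (boolP (x == c (+) odd k)) => [/eqP Ex|Nx].
  have := Hred (altG c k); rewrite size_altG /= E ltnNge ltnW //= => H.
  suff HH : W2 (altG c k) = W2 (x :: r) by have := H HH.
  by rewrite Hc /WA /= -Ex mulmxA SmK mul1mx.

exists c; rewrite Hc /= size_altG; congr (_ :: _).
by clear Hred IH E Hc; rewrite addbN; move: Nx; case: x; case: (c (+) odd k).
Qed.

Definition braid m := W2 (altG false m) = W2 (altG true m).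

Lemma rank2_gen u : (l2 u <= l2 (rcons u true))%N ->
  exists k, W2 u *m ev s = V2 (XY k).1 (XY k).2 /\
    (forall m, (0 < m)%N -> braid m -> (k < m)%N).
Proof.
move=> Hl.
have [r [sr Hr]] := lenA_spec emb2 u.
have Hred : forall r', W2 r' = W2 r -> (size r <= size r')%N.
  by move=> r' H; rewrite sr; apply: lenA_min; rewrite H.
have [c Hc] := red_alt Hred.
have Hrc : forall w, W2 (rcons u true) = W2 w -> (size r <= size w)%N.
  by move=> w H; rewrite sr; apply: (leq_trans Hl); apply: lenA_min.
have WAr : W2 (rcons u true) = W2 r *m Sm s by rewrite -cats1 WA_cat Hr /WA /= mulmx1.
move: Hc; case E: (size r) => [|k] Hc.
  exists 0%N; split => [|m m0 _]; last by [].
  by rewrite -Hr Hc /WA /= mul1mx /V2 scale1r scale0r addr0.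
case: c Hc => Hc.
  have := Hrc (altG false k); rewrite size_altG E ltnn => H.
  suff HH : W2 (rcons u true) = W2 (altG false k) by have := H HH.
  by rewrite WAr Hc altG_last -cats1 WA_cat -mulmxA /WA /= mulmx1 SmK mulmx1.
exists k.+1; split; first by rewrite -Hr Hc W2_XY.
move=> m m0 Hb; rewrite ltnNge; apply/negP => Hmk.
have Es : altG false k.+1 = altG (odd m) (k.+1 - m) ++ altG false m.
  by rewrite -[odd m]/(false (+) odd m) -altG_split subnK.
have Em : altG true m = rcons (altG false m.-1) true.
  by rewrite -[false]/(~~ true) -altG_last prednK.
have := Hrc (altG (odd m) (k.+1 - m) ++ altG false m.-1).
rewrite size_cat !size_altG E.
have -> : (k.+1 - m + m.-1 = k)%N.
  by clear -m0 Hmk; lia.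
rewrite ltnn => H.
suff HH : W2 (rcons u true) = W2 (altG (odd m) (k.+1 - m) ++ altG false m.-1) by have := H HH.
rewrite WAr Hc Es WA_cat Hb Em -cats1 WA_cat WA_cat.
rewrite -!mulmxA; congr (_ *m _); rewrite -[RHS]mulmx1; congr (_ *m _).
by rewrite /WA /= mul1mx SmK.
Qed.

Fixpoint chs (t : R) (k : nat) : R :=
  match k with 0 => 0 | 1 => 1 | (k''.+1 as k').+1 => t * chs t k' - chs t k'' end.

Lemma chsSS t k : chs t k.+2 = t * chs t k.+1 - chs t k.
Proof. by []. Qed.
Lemma chs0 t : chs t 0 = 0. Proof. by []. Qed.
Lemma chs1 t : chs t 1 = 1. Proof. by []. Qed.
Arguments chs : simpl never.

Definition tt := Num.sqrt (ca * cb).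

Section Pos.
Hypotheses (ca0 : 0 < ca) (cb0 : 0 < cb).

Lemma tt_sqr : ca * cb = tt ^+ 2.
Proof. by rewrite sqr_sqrtr // mulr_ge0 // ltW. Qed.

Lemma tt_gt0 : 0 < tt.
Proof. by rewrite sqrtr_gt0 mulr_gt0. Qed.

Lemma XY_chs k : XY k = if odd k then (chs tt k, cb / tt * chs tt k.+1)
                        else (chs tt k.+1, cb / tt * chs tt k).
Proof.
have tt0 : tt != 0 by rewrite gt_eqF // tt_gt0.
elim: k => [|k IH] /=; first by rewrite chs0 chs1 mulr0.
rewrite IH; case: (odd k) => /=; congr (_, _); rewrite ?chsSS.
- have -> : ca * (cb / tt * chs tt k.+1) = (ca * cb) / tt * chs tt k.+1 by field.
  rewrite tt_sqr; field; exact: tt0.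
- field; exact: tt0.
Qed.

Lemma braid_es m : (0 < m)%N -> chs tt m = 0 ->
  W2 (altG false m) *m ev s = W2 (altG true m) *m ev s.
Proof.
move=> m0 cm.
have Em : altG true m = rcons (altG false m.-1) true.
  by rewrite -[false]/(~~ true) -altG_last prednK.
rewrite Em -cats1 WA_cat -mulmxA.
have -> : WA emb2 [:: true] *m ev s = - ev s.
  rewrite /WA /= mulmx1 Sm_ev Mii.
  by apply/matrixP => i j; rewrite !mxE; ring.
rewrite mulmxN !W2_XY !XY_chs.
case: m m0 cm {Em} => // m _ cm /=.
have cm1 : chs tt m.+2 = - chs tt m by rewrite chsSS cm mulr0 sub0r.
case: (odd m) => /=; rewrite /V2; apply/matrixP => i j; rewrite !mxE ?cm ?cm1; ring.
Qed.
End Pos.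
End Rank2.
Arguments chs : simpl never.

Lemma W2_swap s s' u : WA (emb2 s' s) u = WA (emb2 s s') (map negb u).
Proof. by rewrite /WA -map_comp; congr Wmx; apply: eq_map => -[]. Qed.

Lemma fixed_vec s s' (x : 'cV[R]_n) u : (row s M *m x) 0 0 = 0 ->
  (row s' M *m x) 0 0 = 0 -> WA (emb2 s s') u *m x = x.
Proof.
move=> h1 h2; elim: u => [|c u IH]; first by rewrite /WA /= mul1mx.
by rewrite WA_cons -mulmxA IH Sm_mul; case: c => /=; rewrite ?h1 ?h2 scale0r subr0.
Qed.

Lemma fl i j (y : 'cV[R]_n) c :
  (row i M *m (y - c *: ev j)) 0 0 = (row i M *m y) 0 0 - c * M i j.
Proof.
rewrite mulmxBr -scalemxAr row_ev.
set z := row i M *m y.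
by rewrite !mxE eqxx mulr1n.
Qed.

Lemma braid_full s s' m : 0 < ca s s' -> 0 < cb s s' -> (0 < m)%N ->
  chs (tt s s') m = 0 -> 4 - M s s' * M s' s != 0 -> braid s s' m.
Proof.
move=> ca0 cb0 m0 cm D0.
have h1 := braid_es ca0 cb0 m0 cm.
have h2 : WA (emb2 s s') (altG true m) *m ev s' = WA (emb2 s s') (altG false m) *m ev s'.
  have e : tt s' s = tt s s' by rewrite /tt /ca /cb mulrC.
  have := @braid_es s' s cb0 ca0 m m0; rewrite e => /(_ cm).
  by rewrite (W2_swap s s' (altG false m)) (W2_swap s s' (altG true m)) !map_negb_altG.
rewrite /braid; apply: mx_ext => x.
pose f := (row s M *m x) 0 0; pose f' := (row s' M *m x) 0 0.
pose A := M s s'; pose B := M s' s; pose D := 4 - A * B.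
pose p := (2 * f - A * f') / D; pose q := (2 * f' - B * f) / D.
pose x' := x - p *: ev s - q *: ev s'.
have Ex : x = x' + p *: ev s + q *: ev s'.
  by rewrite /x'; apply/matrixP => i j; rewrite !mxE; ring.
have Hf : (row s M *m x') 0 0 = 0.
  rewrite /x' !fl Mii -/f /p /q /D /A; field; exact: D0.
have Hf' : (row s' M *m x') 0 0 = 0.
  rewrite /x' !fl Mii -/f' /p /q /D /B; field; exact: D0.
clearbody x'; rewrite Ex !mulmxDr -!scalemxAr !(fixed_vec _ Hf Hf').
by rewrite h1 h2.
Qed.

Lemma comm_braid s s' : M s s' = 0 -> M s' s = 0 -> braid s s' 2.
Proof.
move=> h1 h2; rewrite /braid /WA /= !mulmx1; apply: mx_ext => x.
rewrite -!mulmxA [Sm s' *m x]Sm_mul [Sm s *m x]Sm_mul !Sm_mul !fl h1 h2 !mulr0 !subr0.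
by rewrite addrAC.
Qed.

Lemma chs_mono t : 2 <= t -> forall k, 0 <= chs t k <= chs t k.+1.
Proof.
move=> t2; elim=> [|k /andP [h1 h2]]; first by rewrite chs0 chs1 lexx ler01.
rewrite chsSS (le_trans h1 h2) andTb.
have : 0 <= (t - 2) * chs t k.+1 by rewrite mulr_ge0 // ?subr_ge0 // (le_trans h1 h2).
nra.
Qed.

Section Trig.
Variable m : nat.
Hypothesis m2 : (2 <= m)%N.
Let th := pi / (m%:R : R).

Lemma th_gt0 : 0 < th.
Proof. by rewrite divr_gt0 ?pi_gt0 // ltr0n; case: m m2. Qed.

Lemma th_ltpi : th < pi.
Proof.
rewrite /th ltr_pdivrMr ?ltr0n; last by case: m m2.
by rewrite ltr_pMr ?pi_gt0 // ltr1n.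
Qed.

Lemma sin_th_gt0 : 0 < sin th.
Proof. by apply: sin_gt0_pi; rewrite th_gt0 th_ltpi. Qed.

Lemma cos_th_ge0 : 0 <= cos th.
Proof.
apply: cos_ge0_pihalf; rewrite (le_trans _ (ltW th_gt0)) ?oppr_le0 ?divr_ge0 ?pi_ge0 //=.
rewrite /th ler_pM2l ?pi_gt0 // lef_pV2 ?posrE ?ltr0n ?(ler_nat _ 2 m) //.
by case: m m2.
Qed.

Lemma chs_sin k : chs (2 * cos th) k = sin (k%:R * th) / sin th.
Proof.
have s0 : sin th != 0 by rewrite gt_eqF // sin_th_gt0.
suff : chs (2 * cos th) k = sin (k%:R * th) / sin th /\
       chs (2 * cos th) k.+1 = sin (k.+1%:R * th) / sin th by case.
elim: k => [|k [IH1 IH2]].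
  by rewrite chs0 chs1 !mul0r sin0 mul0r mul1r divff.
split=> //; rewrite chsSS IH1 IH2.
have e1 : k.+2%:R * th = k.+1%:R * th + th by rewrite -natr1 mulrDl mul1r.
have e0 : k%:R * th = k.+1%:R * th - th by rewrite -natr1 mulrDl mul1r addrK.
rewrite e1 e0 sinB sinD; field; exact: s0.
Qed.

Lemma chs_ge0 k : (k <= m)%N -> 0 <= chs (2 * cos th) k.
Proof.
move=> km; rewrite chs_sin divr_ge0 ?(ltW sin_th_gt0) //.
apply: sin_ge0_pi; rewrite mulr_ge0 ?ler0n ?(ltW th_gt0) //=.
rewrite /th mulrA ler_pdivrMr ?ltr0n; last by case: m m2.
by rewrite mulrC ler_wpM2l ?pi_ge0 // ler_nat.
Qed.

Lemma chs_m : chs (2 * cos th) m = 0.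
Proof.
rewrite chs_sin /th mulrCA divff ?mulr1 ?sinpi ?mul0r // pnatr_eq0; by case: m m2.
Qed.

Lemma cos_th_lt1 : cos th ^+ 2 < 1.
Proof.
rewrite cos2sin2 -[X in _ < X]subr0 ltrD2l ltrN2 exprn_gt0 //; exact: sin_th_gt0.
Qed.
End Trig.

Lemma rank2 s s' u :
  M s s' <= 0 -> M s' s <= 0 -> (M s s' != 0 <-> M s' s != 0) ->
  (M s s' * M s' s != 0 -> 4 <= M s s' * M s' s \/
     exists m : nat, (3 <= m)%N /\ M s s' * M s' s = 4 * (cos (pi / m%:R)) ^+ 2) ->
  (lenA (emb2 s s') u <= lenA (emb2 s s') (rcons u true))%N ->
  exists p q, [/\ 0 <= p, 0 <= q & WA (emb2 s s') u *m ev s = p *: ev s + q *: ev s'].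
Proof.
move=> n1 n2 hz hc Hl.
have [k [Hk Hb]] := rank2_gen Hl.
suff [x0 y0] : 0 <= (XY s s' k).1 /\ 0 <= (XY s s' k).2.
  by exists (XY s s' k).1, (XY s s' k).2; split.
case: (M s s' =P 0) => h1.
  have h2 : M s' s = 0 by case: (M s' s =P 0) => // /eqP /hz; rewrite h1 eqxx.
  have := Hb 2%N isT (comm_braid h1 h2).
  case: k {Hk Hb} => [|[|]] // _ /=.
  by rewrite mulr1 subr0 /cb h2 oppr0; split; rewrite ?ler01 ?lexx.
have h2 : M s' s != 0 by apply/hz/eqP.
have ca0 : 0 < ca s s' by rewrite /ca oppr_gt0 lt_neqAle n1 andbT; apply/eqP.
have cb0 : 0 < cb s s' by rewrite /cb oppr_gt0 lt_neqAle n2 h2.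
have hp : ca s s' * cb s s' = M s s' * M s' s by rewrite /ca /cb mulrNN.
have tt0 := tt_gt0 ca0 cb0.
have cbt : 0 <= cb s s' / tt s s' by rewrite divr_ge0 // ltW.
rewrite (XY_chs ca0 cb0).
have [h4|[m [m3 hm]]] := hc (mulf_neq0 (introN eqP h1) h2).
  have t2 : 2 <= tt s s'.
    have e2 : (2 : R) = Num.sqrt (2 ^+ 2) by rewrite sqrtr_sqr ger0_norm.
    rewrite e2 /tt ler_sqrt; last by rewrite mulr_ge0 // ltW.
    by rewrite hp; apply: le_trans h4; rewrite expr2; lra.
  have /andP [a1 a2] := chs_mono t2 k; have /andP [b1 b2] := chs_mono t2 k.+1.
  by case: (odd k) => /=; split => //; apply: mulr_ge0.
have m2 : (2 <= m)%N by apply: ltnW.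
have et : tt s s' = 2 * cos (pi / m%:R).
  have e4 : (4 : R) = 2 ^+ 2 by rewrite expr2; lra.
  rewrite /tt hp hm e4 -exprMn sqrtr_sqr ger0_norm //.
  by rewrite mulr_ge0 ?ler0n // cos_th_ge0.
have km : (k < m)%N.
  apply: Hb; first by case: m m3 {hm et m2}.
  apply: braid_full => //; first by case: m m3 {hm et m2}.
    by rewrite et chs_m.
  rewrite hm; have := cos_th_lt1 m2; set c := cos _ ^+ 2 => hc1.
  by rewrite gt_eqF //; lra.
have c1 := chs_ge0 m2 (ltnW km); have c2 := chs_ge0 m2 km.
rewrite et in cbt *.
by case: (odd k) => /=; split => //; apply: mulr_ge0.
Qed.


Lemma cmin (P : nat -> Prop) : (exists k, P k) -> exists k, P k /\ forall j, P j -> (k <= j)%N.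
Proof.
move=> [k Pk]; elim/ltn_ind: k Pk => k IH Pk.
case: (classic (exists j, P j /\ (j < k)%N)) => [[j [Pj jk]]|H].
  exact: IH Pj.
exists k; split => // j Pj; rewrite leqNgt; apply/negP => jk; apply: H; by exists j.
Qed.

Definition lw (w : seq 'I_n) := lenA (fun i : 'I_n => i) w.

Lemma WA_id w : WA (fun i : 'I_n => i) w = Wmx w.
Proof. by rewrite /WA map_id. Qed.

Lemma lw_eq w1 w2 : Wmx w1 = Wmx w2 -> lw w1 = lw w2.
Proof. by move=> H; apply: lenA_eq; rewrite !WA_id. Qed.

Lemma lw_spec w : exists r, size r = lw w /\ Wmx r = Wmx w.
Proof. by have [r [h1 h2]] := lenA_spec (fun i : 'I_n => i) w; exists r; rewrite -!WA_id. Qed.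

Lemma lw_min w r : Wmx r = Wmx w -> (lw w <= size r)%N.
Proof. by move=> H; apply: lenA_min; rewrite !WA_id. Qed.

Lemma lw_cat w1 w2 : (lw (w1 ++ w2) <= lw w1 + lw w2)%N.
Proof. exact: lenA_cat. Qed.

Lemma lw_map2 s s' u : (lw (map (emb2 s s') u) <= lenA (emb2 s s') u)%N.
Proof.
have [r [h1 h2]] := lenA_spec (emb2 s s') u.
rewrite -h1 (@lw_eq _ (map (emb2 s s') r)); first by rewrite -(size_map (emb2 s s')) lw_min.
by move: h2; rewrite /WA => ->.
Qed.

Lemma lw_rcons w i : (lw (rcons w i) <= (lw w).+1)%N.
Proof.
rewrite -cats1 -addn1; apply: leq_trans (lw_cat _ _) _.
by rewrite leq_add2l (leq_trans (lenA_le _ _)).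
Qed.

Definition nonneg (x : 'cV[R]_n) := forall j, 0 <= x j 0.

Lemma nonneg_comb p q x y : 0 <= p -> 0 <= q -> nonneg x -> nonneg y ->
  nonneg (p *: x + q *: y).
Proof.
move=> p0 q0 hx hy j; rewrite !mxE; apply: addr_ge0; apply: mulr_ge0 => //.
Qed.

Section Main.
Hypothesis Mneg : forall i j, i != j -> M i j <= 0.
Hypothesis Mz : forall i j, M i j != 0 <-> M j i != 0.
Hypothesis Mc : forall i j, i != j -> M i j * M j i != 0 ->
     4 <= M i j * M j i \/
     exists m : nat, (3 <= m)%N /\ M i j * M j i = 4 * (cos (pi / m%:R)) ^+ 2.

Theorem posroot N : forall w s, (lw w <= N)%N -> (lw w <= lw (rcons w s))%N ->
  nonneg (Wmx w *m ev s).
Proof.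
elim: N => [|N IH] w s hN hl.
  have [r [sr Hr]] := lw_spec w.
  move: hN; rewrite leqn0 => /eqP h0; move: sr; rewrite h0 => /size0nil r0.
  by move=> j; rewrite -Hr r0 /= mul1mx !mxE; case: (_ && _).
have [r [sr Hr]] := lw_spec w.
case: (lastP r) sr Hr => [|r0 s'] sr Hr.
  by apply: IH; rewrite // -sr.
set L := lw w in hl *.
have hr0 : (lw r0 <= L.-1)%N by rewrite /L -sr size_rcons /= lw_min.
have Ew : Wmx w = Wmx r0 *m Sm s' by rewrite -Hr Wmx_rcons.
have L0 : (0 < L)%N by rewrite /L -sr size_rcons.
have ss' : s != s'.
  apply/eqP => ess; move: hl.
  have -> : lw (rcons w s) = lw r0.
    by apply: lw_eq; rewrite Wmx_rcons Ew ess -mulmxA SmK mulmx1.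
  by move=> h; have := leq_trans h hr0; lia.
pose e2 := emb2 s s'.
pose good v u := Wmx v *m WA e2 u = Wmx w /\ (lw v + lenA e2 u <= L)%N.
have [K [[v [u [[g1 g2] vK]]] Kmin]] :
    exists K, (exists v u, good v u /\ lw v = K) /\
      forall j, (exists v u, good v u /\ lw v = j) -> (K <= j)%N.
  apply: cmin; exists (lw r0), r0, [:: false]; split => //; split.
    by rewrite /WA /= mulmx1 Ew.
  have := lenA_le e2 [:: false]; rewrite /= => h1; lia.
have vr0 : (lw v <= lw r0)%N.
  by rewrite vK; apply: Kmin; exists r0, [:: false]; split => //; split;
    [rewrite /WA /= mulmx1 Ew | have := lenA_le e2 [:: false]; rewrite /= => h1; lia].
have vN : (lw v <= N)%N by lia.
have Hv : forall c, (lw v <= lw (rcons v (e2 c)))%N.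
  move=> c; rewrite leqNgt; apply/negP => hlt.
  have : (K <= lw (rcons v (e2 c)))%N.
    apply: Kmin; exists (rcons v (e2 c)), (c :: u); split => //; split.
      by rewrite Wmx_rcons WA_cons -mulmxA (mulmxA (Sm _)) SmK mul1mx.
    have := lenA_cat e2 [:: c] u; have := lenA_le e2 [:: c]; rewrite /= => h1 h2.
    lia.
  lia.
have pv1 := IH v s vN (Hv true).
have pv2 := IH v s' vN (Hv false).
have Hu : (lenA e2 u <= lenA e2 (rcons u true))%N.
  rewrite leqNgt; apply/negP => hlt.
  have : (lw (rcons w s) <= lw v + lenA e2 (rcons u true))%N.
    rewrite (@lw_eq _ (v ++ map e2 (rcons u true))).
      by apply: leq_trans (lw_cat _ _) _; rewrite leq_add2l lw_map2.
    by rewrite Wmx_rcons Wmx_cat -g1 -mulmxA; congr (_ *m _); rewrite map_rcons Wmx_rcons.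
  lia.
have [i1 j1] : M s s' <= 0 /\ M s' s <= 0 by split; apply: Mneg; rewrite // eq_sym.
have [p [q [p0 q0 Hpq]]] := rank2 i1 j1 (Mz s s') (Mc ss') Hu.
rewrite -g1 -mulmxA Hpq mulmxDr -!scalemxAr.
by apply: nonneg_comb.
Qed.
Lemma dichot w i : nonneg (Wmx w *m ev i) \/ nonneg (- (Wmx w *m ev i)).
Proof.
case: (leqP (lw w) (lw (rcons w i))) => h.
  by left; apply: (posroot (leqnn _) h).
right; have := @posroot _ (rcons w i) i (leqnn _).
rewrite (@lw_eq (rcons (rcons w i) i) w); last first.
  by rewrite !Wmx_rcons -mulmxA SmK mulmx1.
move=> /(_ (ltnW h)); rewrite Wmx_rcons -mulmxA Sm_ev Mii.
suff -> : ev i - 2 *: ev i = - ev i by rewrite mulmxN.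
by apply/matrixP => a b; rewrite !mxE; ring.
Qed.
End Main.

Lemma refl_T (v : 'rV[R]_n) i : (refl M i v)^T = Sm i *m v^T.
Proof.
rewrite Sm_mul /refl linearB /= linearZ /= /alpha trmx_delta; congr (_ - _ *: _).
by rewrite mxE; apply: eq_bigr => j _; rewrite !mxE mulrC.
Qed.

Lemma act_T w (v : 'rV[R]_n) : (act_word M w v)^T = Wmx w *m v^T.
Proof. by elim: w => [|i w IH] /=; rewrite ?mul1mx // refl_T IH mulmxA. Qed.

Lemma alpha_T i : (alpha R i)^T = ev i.
Proof. by rewrite /alpha trmx_delta. Qed.

Lemma refl_invol i (v : 'rV[R]_n) : refl M i (refl M i v) = v.
Proof. by apply: trmx_inj; rewrite !refl_T mulmxA SmK mul1mx. Qed.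

Lemma Wmx_rev w : Wmx (rev w) *m Wmx w = 1%:M.
Proof.
elim: w => [|i w IH]; first by rewrite /= mul1mx.
by rewrite rev_cons Wmx_rcons /= -mulmxA (mulmxA (Sm i)) SmK mul1mx.
Qed.

Lemma root_neq0 w i : act_word M w (alpha R i) != 0.
Proof.
apply/eqP => h; have := congr1 trmx h; rewrite act_T alpha_T => h2.
have := congr1 (mulmx (Wmx (rev w))) h2; rewrite mulmxA Wmx_rev mul1mx.
rewrite trmx0 mulmx0 => /matrixP /(_ i 0); rewrite !mxE !eqxx /=.
by move/eqP; rewrite oner_eq0.
Qed.

Lemma root_entries w i j : (act_word M w (alpha R i)) 0 j = (Wmx w *m ev i) j 0.
Proof. by rewrite -alpha_T -act_T mxE. Qed.

End Basic.

Theorem proposition4p5 (R : realType) (n : nat) (M : 'M[R]_n) :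
  is_EGCM M -> egcm_connected M -> infinite_set (is_root M) ->
  forall J : {set 'I_n}, J \proper [set: 'I_n] ->
    infinite_set (fun v : 'rV[R]_n => is_pos_root M v /\ ~ in_span J v).
Proof.
move=> [Mii [Mneg [Mz Mc]]] Hcon Hinf J HJ.
have PRinf : forall s : seq 'rV[R]_n, exists v, is_pos_root M v /\ v \notin s.
  move=> s; have [v [[w [i Ev]] hv]] := Hinf (s ++ map -%R s).
  rewrite mem_cat negb_or in hv; case/andP: hv => hv1 hv2.
  case: (dichot Mii Mneg Mz Mc w i) => hn.
    exists v; split => //; split; first by exists w, i.
    by move=> j; rewrite Ev root_entries.
  exists (- v); split.
    split.
      exists (rcons w i), i; apply: trmx_inj; rewrite act_T alpha_T Wmx_rcons -mulmxA Sm_ev Mii.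
      have -> : ev R i - 2 *: ev R i = - ev R i by apply/matrixP => a b; rewrite !mxE; ring.
      by rewrite mulmxN linearN /= Ev act_T alpha_T.
    by move=> j; rewrite mxE Ev root_entries; have := hn j; rewrite mxE.
  apply: contra hv2 => h; rewrite -[v]opprK; exact: map_f.
have [k0 Hk0] : exists k, forall s : seq 'rV[R]_n, exists v : 'rV[R]_n,
    [/\ is_pos_root M v, 0 < v 0 k & v \notin s].
  apply: NNPP => H.
  have Hc : forall k, exists s : seq 'rV[R]_n,
      forall v, is_pos_root M v -> 0 < v 0 k -> v \in s.
    move=> k; apply: NNPP => H2; apply: H; exists k => s; apply: NNPP => H3.
    apply: H2; exists s => v pv vk; apply: NNPP => H4; apply: H3; exists v.
    by split => //; apply/negP.
  have [S HS] : exists S : seq 'rV[R]_n,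
      forall k v, is_pos_root M v -> 0 < v 0 k -> v \in S.
    suff: forall ks : seq 'I_n, exists S : seq 'rV[R]_n,
        forall k, k \in ks -> forall v, is_pos_root M v -> 0 < v 0 k -> v \in S.
      by case/(_ (enum 'I_n)) => S HS; exists S => k; apply: HS; rewrite mem_enum.
    elim=> [|k ks [S HS]]; first by exists [::].
    have [s1 Hs1] := Hc k; exists (s1 ++ S) => k'; rewrite inE.
    case/orP => [/eqP -> | hk] v pv vk; rewrite mem_cat.
      by rewrite Hs1.
    by rewrite (HS k' hk v pv vk) orbT.
  have [v [pv vS]] := PRinf S.
  have [k vk] : exists k, 0 < v 0 k.
    apply: NNPP => H5.
    have [w [i Ev]] := pv.1.
    have := root_neq0 Mii w i; rewrite -Ev => /eqP; apply.
    apply/matrixP => a b; rewrite ord1 mxE.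
    have := pv.2 b; rewrite le_eqVlt => /orP [/eqP <- //|hb].
    by exfalso; apply: H5; exists b.
  by move: vS; rewrite (HS k).
have Hedge : forall k l, k != l -> M l k != 0 ->
    (forall s : seq 'rV[R]_n, exists v : 'rV[R]_n, [/\ is_pos_root M v, 0 < v 0 k & v \notin s]) ->
    (forall s : seq 'rV[R]_n, exists v : 'rV[R]_n, [/\ is_pos_root M v, 0 < v 0 l & v \notin s]).
  move=> k l kl Mlk Hk s.
  have [b [[[w [i Eb]] bnn] bk bns]] := Hk (s ++ map (refl M l) s).
  rewrite mem_cat negb_or in bns; case/andP: bns => bns1 bns2.
  case: (ltrP 0 (b 0 l)) => bl.
    by exists b; split => //; split => //; exists w, i.
  have bl0 : b 0 l = 0 by apply/eqP; rewrite eq_le bl bnn.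
  have c0 : \sum_j b 0 j * M l j < 0.
    rewrite (bigD1 k) //=.
    have h1 : b 0 k * M l k < 0.
      by rewrite pmulr_rlt0 // lt_neqAle Mlk Mneg // eq_sym.
    have h2 : \sum_(j | j != k) b 0 j * M l j <= 0.
      apply: sumr_le0 => j _; case: (j =P l) => [->|/eqP jl]; first by rewrite bl0 mul0r.
      by rewrite mulr_ge0_le0 // Mneg // eq_sym.
    lra.
  exists (refl M l b); split.
  - split; first by exists (l :: w), i; rewrite Eb.
    move=> j; rewrite /refl !mxE.
    case: (j =P l) => [->|/eqP jl]; rewrite ?eqxx /=.
      by rewrite bl0 mulr1 sub0r oppr_ge0 ltW.
    by rewrite ?(negbTE jl) mulr0 subr0; apply: bnn.
  - rewrite /refl !mxE !eqxx /= bl0 mulr1 sub0r oppr_gt0 //.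
  - apply: contra bns2 => h; rewrite -[b](refl_invol Mii l); exact: map_f.
have Hconn : forall l (s : seq 'rV[R]_n), exists v : 'rV[R]_n, [/\ is_pos_root M v, 0 < v 0 l & v \notin s].
  move=> l; have /connectP [p pth ->] := Hcon k0 l.
  elim: p k0 Hk0 pth => [|y p IH] x Hx //= /andP [/andP [xy Mxy] pth].
  apply: IH pth; apply: Hedge xy _ Hx; exact/Mz.
have [_ [l _ lJ]] := properP HJ.
move=> s; have [v [pv vl vs]] := Hconn l s.
exists v; split => //; split => // [[c Ec]].
move: vl; rewrite Ec summxE big1 ?ltxx // => j jJ; rewrite !mxE /=.
have -> : (l == j) = false by apply/eqP => e; move: lJ; rewrite e jJ.
by rewrite mulr0.
Qed.
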